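(* Let $p,k\ge 1$ be integers, let $a_1,\dots,a_k\in\mathbb{R}$, and let $\mathbf{f}:\mathbb{R}^p\to\mathbb{R}^p$ be a differentiable flux. Let $\mathbb{M}_1,\dots,\mathbb{M}_k:\mathbb{R}^p\to\mathbb{R}^p$ be differentiable maps (the Maxwellians) satisfying, for all $\mathbf{u}$, $$\sum_{i=1}^k \mathbb{M}_i(\mathbf{u})=\mathbf{u},\qquad \sum_{i=1}^k a_i\,\mathbb{M}_i(\mathbf{u})=\mathbf{f}(\mathbf{u}),$$ and define $\mathbf{m}_2(\mathbf{u})=\sum_{i=1}^k a_i^2\,\mathbb{M}_i(\mathbf{u})$. Fix $\mathbf{u}$ and suppose there exists a strictly convex entropy $\eta(\mathbf{u})$ with Hessian matrix $\mathbf{A}_0$ such that: 1. $\mathbf{A}_0\mathbf{f}'(\mathbf{u})$ is symmetric; 2. the Maxwellians are monotone: $\mathbf{A}_0\mathbb{M}_i'(\mathbf{u})$ is symmetric positive definite for all $i\in\{1,\dots,k\}$; 3. $\min_i |a_i| > \rho(\mathbf{f}'(\mathbf{u}))$, where $\rho$ denotes the spectral radius. Then the matrix $\mathbf{K}=\mathbf{A}_0\left[\mathbf{m}_2'(\mathbf{u})-(\mathbf{f}'(\mathbf{u}))^2\right]$ is symmetric positive semi-definite.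
   Context: This arises from a kinetic (BGK-type) model with unknowns $\mathbf{F}\in\mathbb{R}^{kp}$, diagonal velocity matrix $\Lambda=\mathrm{diag}(a_1\mathbf{I}_p,\dots,a_k\mathbf{I}_p)$, projector $\mathbb{P}=(\mathbf{I}_p\ \cdots\ \mathbf{I}_p)$ and Maxwellian $\mathbb{M}=(\mathbb{M}_1,\dots,\mathbb{M}_k)$ satisfying $\mathbb{P}\mathbb{M}(\mathbf{u})=\mathbf{u}$ and $\mathbb{P}\Lambda\mathbb{M}(\mathbf{u})=\mathbf{f}(\mathbf{u})$; then $\mathbf{m}_2=\mathbb{P}\Lambda^2\mathbb{M}$ is the second moment of the Maxwellian. Primes denote Jacobian matrices with respect to $\mathbf{u}$; $\mathbf{A}_0$ is symmetric positive definite since $\eta$ is strictly convex. *)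

(* Defs.v *)
From mathcomp Require Import all_boot all_order all_algebra.
From mathcomp Require Import all_classical all_reals all_analysis.
From mathcomp Require Import complex.
Set Implicit Arguments. Unset Strict Implicit. Unset Printing Implicit Defensive.
Import Order.TTheory GRing.Theory Num.Theory.
Local Open Scope ring_scope.

(* The library's [jacobian f u] acts on row vectors: 'D_v f u = v *m jacobian f u,
   i.e. it is the TRANSPOSE of the usual Jacobian matrix f'(u)
   (whose (i,j) entry is d f_i / d u_j).  [jac f u] is the usual Jacobian. *)
Definition jac (R : realType) (p q : nat) (f : 'rV[R]_p -> 'rV[R]_q) (u : 'rV[R]_p)
  : 'M[R]_(q, p) := (jacobian f u)^T.

Definition grad (R : realType) (p : nat) (eta : 'rV[R]_p -> R) (u : 'rV[R]_p) : 'rV[R]_p :=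
  \row_j ('D_(delta_mx 0 j) eta u).
Definition hessian (R : realType) (p : nat) (eta : 'rV[R]_p -> R) (u : 'rV[R]_p) : 'M[R]_p :=
  jac (grad eta) u.

Definition strictly_convex (R : realType) (p : nat) (eta : 'rV[R]_p -> R) : Prop :=
  forall (x y : 'rV[R]_p) (t : R), x != y -> 0 < t < 1 ->
    eta (t *: x + (1 - t) *: y) < t * eta x + (1 - t) * eta y.

Definition symmetric_mx (R : realType) (p : nat) (A : 'M[R]_p) : Prop := A^T = A.

Definition posdef (R : realType) (p : nat) (A : 'M[R]_p) : Prop :=
  A^T = A /\ forall v : 'cV[R]_p, v != 0 -> 0 < (v^T *m A *m v) 0 0.

Definition possemidef (R : realType) (p : nat) (A : 'M[R]_p) : Prop :=
  A^T = A /\ forall v : 'cV[R]_p, 0 <= (v^T *m A *m v) 0 0.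

Definition spectral_radius (R : realType) (p : nat) (A : 'M[R]_p) : R :=
  sup [set r : R | exists2 l : R[i],
         eigenvalue (map_mx (fun x : R => (x%:C)%C) A) l & `|l| = (r%:C)%C].

(* Main.v *)
Require Import Defs.
From mathcomp Require Import all_boot all_order all_algebra.
From mathcomp Require Import all_classical all_reals all_analysis.
From mathcomp Require Import complex.
Import Order.TTheory GRing.Theory Num.Theory.
Local Open Scope ring_scope.

Lemma eq_lin1 (R : ringType) m n (F G : 'rV[R]_m -> 'rV[R]_n) :
  (forall v, F v = G v) -> lin1_mx F = lin1_mx G.
Proof. by move=> e; apply/matrixP => i j; rewrite !mxE e. Qed.

Lemma lin1_mxD (R : ringType) m n (F G : 'rV[R]_m -> 'rV[R]_n) :
  lin1_mx (fun v => F v + G v) = lin1_mx F + lin1_mx G.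
Proof. by apply/matrixP => i j; rewrite !mxE. Qed.

Lemma lin1_mxZ (R : comRingType) m n (c : R) (F : 'rV[R]_m -> 'rV[R]_n) :
  lin1_mx (fun v => c *: F v) = c *: lin1_mx F.
Proof. by apply/matrixP => i j; rewrite !mxE. Qed.

Lemma lin1_mx0 (R : ringType) m n :
  lin1_mx (fun v : 'rV[R]_m => (0 : 'rV[R]_n)) = 0.
Proof. by apply/matrixP => i j; rewrite !mxE. Qed.

Lemma lin1_mx_id (R : ringType) m :
  lin1_mx (fun v : 'rV[R]_m => v) = 1%:M.
Proof. by apply/matrixP => i j; rewrite !mxE /= eq_sym. Qed.

Lemma jacobianD (R : realType) (p : nat) (g h : 'rV[R]_p -> 'rV[R]_p) x :
  differentiable g x -> differentiable h x ->
  jacobian (fun v => g v + h v) x = jacobian g x + jacobian h x.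
Proof.
move=> dg dh; rewrite /jacobian; have E := diffD dg dh.
rewrite -lin1_mxD; apply: eq_lin1 => v; exact: (congr1 (fun F => F v) E).
Qed.

Lemma differentiableD' (R : realType) (p : nat) (g h : 'rV[R]_p -> 'rV[R]_p) x :
  differentiable g x -> differentiable h x ->
  differentiable (fun v => g v + h v) x.
Proof. move=> dg dh; exact: (differentiableD dg dh). Qed.

Lemma jacobianZ (R : realType) (p : nat) (g : 'rV[R]_p -> 'rV[R]_p) (c : R) x :
  differentiable g x -> jacobian (fun v => c *: g v) x = c *: jacobian g x.
Proof.
move=> dg; rewrite /jacobian; have E := diffZ c dg.
rewrite -lin1_mxZ; apply: eq_lin1 => v; exact: (congr1 (fun F => F v) E).
Qed.

Lemma differentiableZ' (R : realType) (p : nat) (g : 'rV[R]_p -> 'rV[R]_p) (c : R) x :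
  differentiable g x -> differentiable (fun v => c *: g v) x.
Proof. move=> dg; exact: (differentiableZ c dg). Qed.

Lemma jacobian_cst0 (R : realType) (p : nat) x :
  jacobian (fun _ : 'rV[R]_p => (0 : 'rV[R]_p)) x = 0.
Proof.
rewrite /jacobian; have E := diff_cst (0 : 'rV[R]_p) x.
rewrite -(lin1_mx0 R p p); apply: eq_lin1 => v; exact: (congr1 (fun F => F v) E).
Qed.

Lemma jacobian_id (R : realType) (p : nat) x :
  jacobian (fun v : 'rV[R]_p => v) x = 1%:M.
Proof.
rewrite /jacobian; have E := @diff_val _ _ _ _ _ _ _ (is_diff_id x).
rewrite -(lin1_mx_id R p); apply: eq_lin1 => v; exact: (congr1 (fun F => F v) E).
Qed.

Lemma jacobian_sum (R : realType) (p : nat) (I : Type) (r : seq I) (c : I -> R)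
  (F : I -> 'rV[R]_p -> 'rV[R]_p) x :
  (forall i, differentiable (F i) x) ->
  differentiable (fun v => \sum_(i <- r) c i *: F i v) x /\
  jacobian (fun v => \sum_(i <- r) c i *: F i v) x = \sum_(i <- r) c i *: jacobian (F i) x.
Proof.
move=> dF; elim: r => [|i r [IHd IHj]].
  have -> : (fun v => \sum_(i <- [::]) c i *: F i v) = (fun _ => 0).
    by apply: funext => v; rewrite big_nil.
  rewrite big_nil jacobian_cst0; split => //.
have -> : (fun v => \sum_(j <- i :: r) c j *: F j v) =
   (fun v => c i *: F i v + (fun w => \sum_(j <- r) c j *: F j w) v).
  by apply: funext => v; rewrite big_cons.
have di := @differentiableZ' _ _ _ (c i) _ (dF i).
rewrite big_cons jacobianD // jacobianZ // IHj; split => //.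
exact: (@differentiableD' _ _ _ _ _ di IHd).
Qed.

Lemma term_expand (R : comRingType) p (J S : 'M[R]_p) (c : R) :
  (J - c%:M)^T *m S *m (J - c%:M) =
  J^T *m S *m J - c *: (J^T *m S) - c *: (S *m J) + c ^+ 2 *: S.
Proof.
rewrite (raddfB (@trmx R p p)) /= tr_scalar_mx !mulmxBl !mulmxBr mul_scalar_mx mul_mx_scalar.
rewrite -scalemxAl mul_mx_scalar scalerA -expr2.
by rewrite opprD opprK addrA.
Qed.

Lemma key (R : realType) (p k : nat) (a : 'I_k -> R) (A0 J : 'M[R]_p) (B : 'I_k -> 'M[R]_p) :
  A0^T = A0 -> \sum_i B i = 1%:M -> J = \sum_i a i *: B i ->
  (A0 *m J)^T = A0 *m J -> (forall i, (A0 *m B i)^T = A0 *m B i) ->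
  (forall i (v : 'cV[R]_p), 0 <= (v^T *m (A0 *m B i) *m v) 0 0) ->
  possemidef (A0 *m (\sum_i (a i ^+ 2) *: B i - J ^+ 2)).
Proof.
move=> sA sB eJ sAJ sS pS.
set S := fun i => A0 *m B i.
have hA : A0 = \sum_i S i by rewrite /S -mulmx_sumr sB mulmx1.
have hAJ : A0 *m J = \sum_i a i *: S i.
  by rewrite eJ mulmx_sumr; apply: eq_bigr => i _; rewrite /S scalemxAr.
have tJA : J^T *m A0 = A0 *m J by rewrite -sAJ trmx_mul sA.
have E : A0 *m (\sum_i (a i ^+ 2) *: B i - J ^+ 2) =
    \sum_i (J - (a i)%:M)^T *m S i *m (J - (a i)%:M).
  rewrite [RHS](eq_bigr _ (fun (i : 'I_k) _ => @term_expand _ _ J (S i) (a i))).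
  rewrite big_split /= !sumrB -!mulmx_suml -mulmx_sumr -hA.
  have e1 : \sum_i a i *: (J^T *m S i) = J^T *m (A0 *m J).
    by rewrite hAJ mulmx_sumr; apply: eq_bigr => i _; rewrite scalemxAr.
  have e2 : \sum_i a i *: (S i *m J) = (A0 *m J) *m J.
    by rewrite hAJ mulmx_suml; apply: eq_bigr => i _; rewrite scalemxAl.
  have e3 : \sum_i a i ^+ 2 *: S i = A0 *m \sum_i a i ^+ 2 *: B i.
    by rewrite mulmx_sumr; apply: eq_bigr => i _; rewrite /S scalemxAr.
  rewrite e1 e2 e3 [J^T *m (A0 *m J)]mulmxA subrr sub0r addrC mulmxBr expr2 -mulmxE [A0 *m (J *m J)]mulmxA.
  by [].
rewrite E; split.
  rewrite linear_sum; apply: eq_bigr => i _ /=.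
  have sS' : (S i)^T = S i by exact: sS.
  by rewrite !trmx_mul trmxK -trmx_mul sS mulmxA.
move=> v; rewrite mulmx_sumr mulmx_suml summxE; apply: sumr_ge0 => i _.
have -> : v^T *m ((J - (a i)%:M)^T *m S i *m (J - (a i)%:M)) *m v =
   ((J - (a i)%:M) *m v)^T *m S i *m ((J - (a i)%:M) *m v).
  by rewrite trmx_mul !mulmxA.
exact: pS.
Qed.

Theorem proposition1 (R : realType) (p k : nat) (hp : (0 < p)%N) (hk : (0 < k)%N)
  (a : 'I_k -> R) (f : 'rV[R]_p -> 'rV[R]_p) (M : 'I_k -> 'rV[R]_p -> 'rV[R]_p)
  (hf : forall u, differentiable f u)
  (hM : forall i u, differentiable (M i) u)
  (hMsum : forall u, \sum_(i < k) M i u = u)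
  (hMflux : forall u, \sum_(i < k) a i *: M i u = f u)
  (u : 'rV[R]_p) (eta : 'rV[R]_p -> R) (A0 : 'M[R]_p)
  (heta : strictly_convex eta) (hA0 : A0 = hessian eta u) (hA0pd : posdef A0)
  (h1 : symmetric_mx (A0 *m jac f u))
  (h2 : forall i, posdef (A0 *m jac (M i) u))
  (h3 : forall i, spectral_radius (jac f u) < `|a i|) :
  let m2 := fun v => \sum_(i < k) (a i ^+ 2) *: M i v in
  possemidef (A0 *m (jac m2 u - jac f u ^+ 2)).
Proof.
move=> m2.
have [hA0s _] := hA0pd.
have dM := fun i => hM i u.
have sB : \sum_i jac (M i) u = 1%:M.
  have E : (fun v => \sum_(i < k) (fun _ => (1 : R)) i *: M i v) = (fun v => v).
    by apply: funext => v /=; under eq_bigr do rewrite scale1r; exact: hMsum.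
  have H := (@jacobian_sum _ _ _ (index_enum 'I_k) (fun _ => (1 : R)) M _ dM).2.
  rewrite E jacobian_id in H.
  rewrite -trmx1 H /jac.
  rewrite linear_sum.
  apply: eq_bigr => i _.
  rewrite /=.
  rewrite scale1r.
  reflexivity.
have eJ : jac f u = \sum_i a i *: jac (M i) u.
  have Ef : f = (fun v => \sum_(i < k) a i *: M i v).
    by apply: funext => v; rewrite hMflux.
  rewrite /jac Ef (@jacobian_sum _ _ _ (index_enum 'I_k) a M _ dM).2 linear_sum.
  by apply: eq_bigr => i _; rewrite linearZ.
have em2 : jac m2 u = \sum_i (a i ^+ 2) *: jac (M i) u.
  rewrite /jac /m2 (@jacobian_sum _ _ _ (index_enum 'I_k) (fun i => a i ^+ 2) M _ dM).2 linear_sum.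
  by apply: eq_bigr => i _; rewrite linearZ.
rewrite em2.
apply: (@key R p k a A0 (jac f u) (fun i => jac (M i) u) hA0s sB eJ h1).
- move=> i; have [hs _] := h2 i; exact: hs.
- move=> i v; have [_ hp2] := h2 i.
  have [->|nz] := eqVneq v 0.
    rewrite trmx0 !mul0mx mxE; exact: lexx.
  exact: ltW (hp2 v nz).
Qed.
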